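(* Let $T$ be one of $\mathrm{DLO}$, $\mathrm{DOAG}$, $\mathrm{RCF}$, let $\boldsymbol{M}$ be a model of $T$, and let $x,y$ be finite tuples of variables. Every Boolean combination (inside $\boldsymbol{M}^{(x,y)}$) of finitely many special stable subsets of $\boldsymbol{M}^{(x;y)}$ is a finite union of special stable subsets of $\boldsymbol{M}^{(x;y)}$.
   Context: $\mathrm{DLO}=\mathrm{Th}(\mathbb{R},<)$ (dense linear orders without endpoints) in the language $\{<\}$, $\mathrm{DOAG}=\mathrm{Th}(\mathbb{R},+,<)$ (divisible ordered abelian groups) in the language $\{+,<\}$ (with the usual constants/inverse as appropriate), $\mathrm{RCF}=\mathrm{Th}(\mathbb{R},+,\cdot,<)$ (real closed fields) in the ordered ring language; ''definable'' means definable with parameters from $\boldsymbol{M}$. $\boldsymbol{M}^{x}$ is the cartesian power of $\boldsymbol{M}$ indexed by the variables of $x$, and $\boldsymbol{M}^{(x;y)}$ denotes $\boldsymbol{M}^{(x,y)}$ with the fixed division of variables $(x;y)$. A set is equationally definable if it is defined by a Boolean combination of atomic formulas with parameters from $\boldsymbol{M}$ that do not involve the symbol $<$. A definable set $D\subseteq\boldsymbol{M}^{(x;y)}$ is special stable (with respect to $(x;y)$) if there are definable sets $X\subseteq \boldsymbol{M}^x$, $Y\subseteq\boldsymbol{M}^y$ and an equationally definable set $Z\subseteq\boldsymbol{M}^{(x;y)}$ with $D=Z\cap(X\times Y)$. *)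

(* Defs.v *)
From mathcomp Require Import all_boot.
From Stdlib Require Import List.

Set Implicit Arguments.
Unset Strict Implicit.
Unset Printing Implicit Defensive.

Inductive theory := DLO | DOAG | RCF.

(* A structure for the largest language {<, 0, 1, +, -, *}; for smaller
   languages the unused symbols are simply never used in formulas. *)
Record Str := {
  car :> Type;
  s_lt : car -> car -> Prop;
  s_zero : car;
  s_one : car;
  s_add : car -> car -> car;
  s_opp : car -> car;
  s_mul : car -> car -> car }.

Section TheoryAx.
Variable S : Str.
Local Notation "a <' b" := (s_lt a b) (at level 70).
Local Notation "a +' b" := (s_add a b) (at level 50, left associativity).
Local Notation "a *' b" := (s_mul a b) (at level 40, left associativity).

Definition strict_linear_order : Prop :=
  (forall a : S, ~ a <' a) /\
  (forall a b c : S, a <' b -> b <' c -> a <' c) /\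
  (forall a b : S, a <' b \/ a = b \/ b <' a).

Definition DLO_axioms : Prop :=
  strict_linear_order /\
  inhabited S /\
  (forall a b : S, a <' b -> exists c, a <' c /\ c <' b) /\
  (forall a : S, exists b, b <' a) /\
  (forall a : S, exists b, a <' b).

Definition OAG_axioms : Prop :=
  strict_linear_order /\
  (forall a b c : S, a +' (b +' c) = (a +' b) +' c) /\
  (forall a b : S, a +' b = b +' a) /\
  (forall a : S, s_zero S +' a = a) /\
  (forall a : S, s_opp a +' a = s_zero S) /\
  (forall a b c : S, a <' b -> a +' c <' b +' c).

Fixpoint nmul (k : nat) (b : S) : S :=
  match k with O => s_zero S | Datatypes.S k' => b +' nmul k' b end.

Definition DOAG_axioms : Prop :=
  OAG_axioms /\
  (exists a : S, a <> s_zero S) /\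
  (forall (a : S) (k : nat), exists b, nmul k.+1 b = a).

(* Horner evaluation of the polynomial with coefficient list
   [c_0; c_1; ...; c_d] (constant term first). *)
Definition horner (cs : list S) (r : S) : S :=
  fold_right (fun c acc => c +' r *' acc) (s_zero S) cs.

Definition RCF_axioms : Prop :=
  OAG_axioms /\
  (forall a b c : S, a *' (b *' c) = (a *' b) *' c) /\
  (forall a b : S, a *' b = b *' a) /\
  (forall a : S, s_one S *' a = a) /\
  (forall a b c : S, a *' (b +' c) = a *' b +' a *' c) /\
  s_zero S <> s_one S /\
  (forall a : S, a <> s_zero S -> exists b, a *' b = s_one S) /\
  (forall a b : S, s_zero S <' a -> s_zero S <' b -> s_zero S <' a *' b) /\
  (forall a : S, s_zero S <' a -> exists b, b *' b = a) /\
  (* monic polynomials of odd degree have a root *)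
  (forall cs : list S, Nat.odd (length cs) = true ->
     exists r, horner (cs ++ s_one S :: nil) r = s_zero S).
End TheoryAx.

Definition model_of (T : theory) (S : Str) : Prop :=
  match T with
  | DLO => DLO_axioms S
  | DOAG => DOAG_axioms S
  | RCF => RCF_axioms S
  end.

Section Syntax.
Variable M : Type.

Inductive term :=
  | TVar (i : nat) | TPar (c : M) | TZero | TOne
  | TAdd (t u : term) | TOpp (t : term) | TMul (t u : term).

Inductive form :=
  | FTrue | FFalse
  | FEq (t u : term) | FLt (t u : term)
  | FNot (f : form) | FAnd (f g : form) | FOr (f g : form)
  | FEx (i : nat) (f : form) | FAll (i : nat) (f : form).

Fixpoint term_in (T : theory) (t : term) : Prop :=
  match t with
  | TVar _ | TPar _ => True
  | TZero | TOpp _ => T <> DLO /\ (match t with TOpp u => term_in T u | _ => True end)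
  | TAdd u v => T <> DLO /\ term_in T u /\ term_in T v
  | TOne => T = RCF
  | TMul u v => T = RCF /\ term_in T u /\ term_in T v
  end.

Fixpoint form_in (T : theory) (f : form) : Prop :=
  match f with
  | FTrue | FFalse => True
  | FEq t u | FLt t u => term_in T t /\ term_in T u
  | FNot g => form_in T g
  | FAnd g h | FOr g h => form_in T g /\ form_in T h
  | FEx _ g | FAll _ g => form_in T g
  end.

Fixpoint equational (f : form) : Prop :=
  match f with
  | FTrue | FFalse | FEq _ _ => True
  | FLt _ _ | FEx _ _ | FAll _ _ => False
  | FNot g => equational g
  | FAnd g h | FOr g h => equational g /\ equational h
  end.
End Syntax.

Arguments TVar {M}. Arguments TZero {M}. Arguments TOne {M}.
Arguments FTrue {M}. Arguments FFalse {M}.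

Section Semantics.
Variable S : Str.

Fixpoint eval (env : nat -> S) (t : term S) : S :=
  match t with
  | TVar i => env i
  | TPar c => c
  | TZero => s_zero S
  | TOne => s_one S
  | TAdd u v => s_add (eval env u) (eval env v)
  | TOpp u => s_opp (eval env u)
  | TMul u v => s_mul (eval env u) (eval env v)
  end.

Definition upd (env : nat -> S) (i : nat) (a : S) : nat -> S :=
  fun j => if Nat.eqb j i then a else env j.

Fixpoint sat (env : nat -> S) (f : form S) : Prop :=
  match f with
  | FTrue => True
  | FFalse => False
  | FEq t u => eval env t = eval env u
  | FLt t u => s_lt (eval env t) (eval env u)
  | FNot g => ~ sat env g
  | FAnd g h => sat env g /\ sat env h
  | FOr g h => sat env g \/ sat env h
  | FEx i g => exists a, sat (upd env i a) g
  | FAll i g => forall a, sat (upd env i a) g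
  end.

(* Subsets of M^x (x a tuple of n variables, interpreted as variables 0..n-1). *)
Definition tset (n : nat) := ('I_n -> S) -> Prop.

(* Subsets of M^(x;y): x interpreted as variables 0..n-1, y as n..n+m-1. *)
Definition pset (n m : nat) := (('I_n -> S) * ('I_m -> S)) -> Prop.

Definition env_ext n (a : 'I_n -> S) (env : nat -> S) : Prop :=
  forall i : 'I_n, env i = a i.

Definition env_ext2 n m (p : ('I_n -> S) * ('I_m -> S)) (env : nat -> S) : Prop :=
  (forall i : 'I_n, env i = p.1 i) /\ (forall j : 'I_m, env (n + j) = p.2 j).

(* definable with parameters (any other free variables of the formula
   must be irrelevant, which is forced by quantifying over all environments) *)
Definition definable (T : theory) n (X : tset n) : Prop :=
  exists phi : form S, form_in T phi /\
    forall a env, env_ext a env -> (X a <-> sat env phi).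

Definition eq_definable2 (T : theory) n m (Z : pset n m) : Prop :=
  exists phi : form S, form_in T phi /\ equational phi /\
    forall p env, env_ext2 p env -> (Z p <-> sat env phi).

Definition special_stable (T : theory) n m (D : pset n m) : Prop :=
  exists (X : tset n) (Y : tset m) (Z : pset n m),
    definable T X /\ definable T Y /\ eq_definable2 T Z /\
    forall p, D p <-> (Z p /\ X p.1 /\ Y p.2).
End Semantics.

Inductive boolcomb {A : Type} (G : list (A -> Prop)) : (A -> Prop) -> Prop :=
  | bc_gen D : List.In D G -> boolcomb G D
  | bc_full : boolcomb G (fun _ => True)
  | bc_compl D : boolcomb G D -> boolcomb G (fun p => ~ D p)
  | bc_inter D E : boolcomb G D -> boolcomb G E -> boolcomb G (fun p => D p /\ E p)
  | bc_union D E : boolcomb G D -> boolcomb G E -> boolcomb G (fun p => D p \/ E p).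

(* Main.v *)
Require Import Defs.
From mathcomp Require Import all_boot.
From Stdlib Require Import List Classical.

Section Aux.
Variables (T : theory) (S : Str) (n m : nat).

Lemma def_true k : definable T (fun _ : 'I_k -> S => True).
Proof. exists FTrue; split; [exact I|]; move=> a env _; simpl; tauto. Qed.

Lemma def_not k (X : tset S k) : definable T X -> definable T (fun a => ~ X a).
Proof.
move=> [phi [Hf H]]; exists (FNot phi); split => // a env He; simpl.
rewrite (H a env He); tauto.
Qed.

Lemma def_and k (X Y : tset S k) : definable T X -> definable T Y ->
  definable T (fun a => X a /\ Y a).
Proof.
move=> [phi [Hf H]] [psi [Hg H']]; exists (FAnd phi psi); split; [by split|].
move=> a env He; simpl; rewrite (H a env He) (H' a env He); tauto.
Qed.

Lemma eqd_true : eq_definable2 T (fun _ : ('I_n -> S) * ('I_m -> S) => True).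
Proof. exists FTrue; do 2 (split; [exact I|]); move=> p env _; simpl; tauto. Qed.

Lemma eqd_not (Z : pset S n m) : eq_definable2 T Z -> eq_definable2 T (fun p => ~ Z p).
Proof.
move=> [phi [Hf [He H]]]; exists (FNot phi); do 2 (split => //).
move=> p env E; simpl; rewrite (H p env E); tauto.
Qed.

Lemma eqd_and (Z W : pset S n m) : eq_definable2 T Z -> eq_definable2 T W ->
  eq_definable2 T (fun p => Z p /\ W p).
Proof.
move=> [phi [Hf [He H]]] [psi [Hg [He' H']]]; exists (FAnd phi psi).
split; [by split|]; split; [by split|].
move=> p env E; simpl; rewrite (H p env E) (H' p env E); tauto.
Qed.

Definition good (B : pset S n m) := exists L : list (pset S n m),
    (forall D, List.In D L -> special_stable T D) /\
    (forall p, B p <-> exists D, List.In D L /\ D p).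

Lemma good_ext (B B' : pset S n m) : (forall p, B p <-> B' p) -> good B -> good B'.
Proof.
move=> E [L [H1 H2]]; exists L; split => // p; rewrite -E; exact: H2.
Qed.

Lemma good_ss (D : pset S n m) : special_stable T D -> good D.
Proof.
move=> H; exists (D :: nil); split.
- by move=> D' [<-|[]].
- move=> p; split; [move=> Dp; exists D; split => //; left => //|].
  by move=> [D' [[<-|[]] ?]].
Qed.

Lemma ss_inter (D1 D2 : pset S n m) : special_stable T D1 -> special_stable T D2 ->
  special_stable T (fun p => D1 p /\ D2 p).
Proof.
move=> [X1 [Y1 [Z1 [HX1 [HY1 [HZ1 H1]]]]]] [X2 [Y2 [Z2 [HX2 [HY2 [HZ2 H2]]]]]].
exists (fun a => X1 a /\ X2 a), (fun a => Y1 a /\ Y2 a), (fun p => Z1 p /\ Z2 p).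
split; [exact: def_and|]; split; [exact: def_and|]; split; [exact: eqd_and|].
move=> p; rewrite H1 H2; tauto.
Qed.

Lemma good_union (B1 B2 : pset S n m) : good B1 -> good B2 ->
  good (fun p => B1 p \/ B2 p).
Proof.
move=> [L1 [A1 E1]] [L2 [A2 E2]]; exists (L1 ++ L2); split.
- move=> D i; case: (in_app_or _ _ _ i) => ?; [exact: A1|exact: A2].
- move=> p; rewrite E1 E2; split.
  + move=> [[D [? ?]]|[D [? ?]]]; exists D; split => //; apply: in_or_app; tauto.
  + move=> [D [i ?]]; case: (in_app_or _ _ _ i) => ?; [left|right]; exists D; tauto.
Qed.

Lemma good_inter (B1 B2 : pset S n m) : good B1 -> good B2 ->
  good (fun p => B1 p /\ B2 p).
Proof.
move=> [L1 [A1 E1]] [L2 [A2 E2]].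
exists (map (fun pr : pset S n m * pset S n m => fun p => pr.1 p /\ pr.2 p)
          (list_prod L1 L2)); split.
- move=> D /in_map_iff [[D1 D2] [<- /in_prod_iff [? ?]]].
  apply: ss_inter; [exact: A1|exact: A2].
- move=> p; rewrite E1 E2; split.
  + move=> [[D1 [? ?]] [D2 [? ?]]].
    exists (fun p => D1 p /\ D2 p); split => //.
    apply/in_map_iff; exists (D1, D2); split => //; exact/in_prod_iff.
  + move=> [D [/in_map_iff [[D1 D2] [<- /in_prod_iff [? ?]]] [? ?]]].
    split; [exists D1|exists D2]; tauto.
Qed.

Lemma good_full : good (fun _ => True).
Proof.
apply: good_ss; exists (fun _ => True), (fun _ => True), (fun _ => True).
split; [exact: def_true|]; split; [exact: def_true|]; split; [exact: eqd_true|].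
move=> p; tauto.
Qed.

Lemma good_compl_ss (D : pset S n m) : special_stable T D -> good (fun p => ~ D p).
Proof.
move=> [X [Y [Z [HX [HY [HZ H]]]]]].
apply: (@good_ext (fun p => ((fun p => (~ X p.1) /\ True) p \/ (fun p => True /\ ~ Y p.2) p)
   \/ (fun p => ~ Z p /\ X p.1 /\ Y p.2) p)).
{ move=> p /=; rewrite H.
  case: (classic (X p.1)); case: (classic (Y p.2)); case: (classic (Z p)); tauto. }
apply: good_union; [apply: good_union|]; apply: good_ss.
- exists (fun a => ~ X a), (fun _ => True), (fun _ => True).
  split; [exact: def_not|]; split; [exact: def_true|]; split; [exact: eqd_true|].
  move=> p; tauto.
- exists (fun _ => True), (fun a => ~ Y a), (fun _ => True).
  split; [exact: def_true|]; split; [exact: def_not|]; split; [exact: eqd_true|].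
  move=> p; tauto.
- exists X, Y, (fun p => ~ Z p).
  split => //; split => //; split; [exact: eqd_not|].
  move=> p; tauto.
Qed.

Lemma good_compl (B : pset S n m) : good B -> good (fun p => ~ B p).
Proof.
move=> [L [A E]].
have K : forall L0 : list (pset S n m), (forall D, List.In D L0 -> special_stable T D) ->
  good (fun p => ~ exists D, List.In D L0 /\ D p).
{ clear E A; elim => [|D L1 IH] AL.
  - apply: (@good_ext (fun _ => True)); last exact: good_full.
    move=> p; split => // _ [D [[] _]].
  - apply: (@good_ext (fun p => (fun p => ~ D p) p /\
         (fun p => ~ exists D, List.In D L1 /\ D p) p)).
    + move=> p /=; split.
      * move=> [h1 h2] [D' [[<-|i] d]]; [tauto|apply: h2; exists D'; tauto].
      * move=> h; split; [move=> d; apply: h; exists D; split => //; left => //|].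
        move=> [D' [i d]]; apply: h; exists D'; split => //; right => //.
    + apply: good_inter; [apply: good_compl_ss; apply: AL; left => //|].
      apply: IH => D' i; apply: AL; right => //. }
refine (good_ext _ _ _ (K L A)) => p; rewrite E; tauto.
Qed.
End Aux.

Theorem lemma2p2 (T : theory) (S : Str) (HS : model_of T S) (n m : nat)
  (G : list (pset S n m)) :
  (forall D, List.In D G -> special_stable T D) ->
  forall B : pset S n m, boolcomb G B ->
  exists L : list (pset S n m),
    (forall D, List.In D L -> special_stable T D) /\
    (forall p, B p <-> exists D, List.In D L /\ D p).
Proof.
move=> HG B HB; change (@good T S n m B); elim: HB.
- move=> D i; apply: good_ss; exact: HG.
- exact: good_full.
- move=> D _ IH; exact: good_compl.
- move=> D E _ ? _ ?; exact: good_inter.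
- move=> D E _ ? _ ?; exact: good_union.
Qed.
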